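(* Let $1 \leq k \leq n$, let $l, u \in \mathbb{R}^n$ with $l_i \leq u_i$ for all $i$, and let $x \in \mathbb{R}^n$ satisfy $l_i \leq x_i \leq u_i$ for all $i$. Put $L = Q_k(l)$. Then for every subset $W \subseteq \{1, \ldots, n\}$ with $|W| \geq k$ and every real $U > L$, $$Q_k(x) \geq L + \frac{U - L}{|W| - k + 1}\left(\sum_{i \in W} \frac{x_i - L}{\max(U, u_i) - L} - k + 1\right).$$
   Context: For $y \in \mathbb{R}^n$ and an integer $1 \leq k \leq n$, $Q_k(y)$ denotes the $k$-th largest entry of $y$ (entries counted with multiplicity). *)

(* Defs.v *)
From HB Require Import structures.
From mathcomp Require Import all_boot all_order all_algebra.
Set Implicit Arguments. Unset Strict Implicit. Unset Printing Implicit Defensive.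
Import Order.TTheory GRing.Theory Num.Theory.
Local Open Scope ring_scope.

(* Q_k(y): the k-th largest entry of y (1-based, with multiplicity):
   sort the entries in nonincreasing order and take the entry at
   position k (index k-1). Vectors of R^n are functions 'I_n -> R. *)
Definition Qk (R : realDomainType) (n : nat) (k : nat) (y : 'I_n -> R) : R :=
  nth 0 (sort (fun a b : R => b <= a) [seq y i | i <- enum 'I_n]) k.-1.

(* Main.v *)
Require Import Defs.
From HB Require Import structures.
From mathcomp Require Import all_boot all_order all_algebra.
From mathcomp Require Import zify ring lra.
Import Order.TTheory GRing.Theory Num.Theory.
Local Open Scope ring_scope.

Lemma card_count (R : realDomainType) n (y : 'I_n -> R) (P : pred R) :
  #|[set i | P (y i)]| = count P [seq y i | i <- enum 'I_n].
Proof.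
rewrite cardsE cardE /enum_mem size_filter count_map -enumT.
rewrite [X in _ = count _ X](eq_filter (a2 := predT)) // filter_predT.
by apply: eq_count.
Qed.

Section Q.
Variables (R : realDomainType) (n k : nat) (y : 'I_n -> R).
Hypotheses (hk1 : (1 <= k)%N) (hkn : (k <= n)%N).
Let s := sort (fun a b : R => b <= a) [seq y i | i <- enum 'I_n].
Let srt : sorted (fun a b : R => b <= a) s.
Proof. apply: sort_sorted => a b; exact: le_total. Qed.
Let sz : size s = n.
Proof. by rewrite size_sort size_map size_enum_ord. Qed.
Let tr : transitive (fun a b : R => b <= a).
Proof. move=> a b c h1 h2; exact: le_trans h2 h1. Qed.
Let hp : perm_eq s [seq y i | i <- enum 'I_n].
Proof. by rewrite perm_sort. Qed.

Lemma Qk_ge : (k <= #|[set i | (Qk k y <= y i)%R]|)%N.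
Proof.
rewrite (card_count _ _ y (fun v => Qk k y <= v)) -(permP hp).
rewrite -(cat_take_drop k s) count_cat.
have : count (fun v => Qk k y <= v) (take k s) = size (take k s).
  apply/eqP; rewrite -all_count.
  apply/(all_nthP 0) => j; rewrite size_takel ?sz // => hj.
  rewrite nth_take //.
  rewrite /Qk -/s; apply: (sorted_leq_nth tr (lexx) 0 srt).
  1-3: rewrite ?inE ?sz; lia.
rewrite size_takel ?sz // => ->; exact: leq_addr.
Qed.

Lemma Qk_gt : (#|[set i | (Qk k y < y i)%R]| <= k.-1)%N.
Proof.
rewrite (card_count _ _ y (fun v => Qk k y < v)) -(permP hp).
rewrite -(cat_take_drop k.-1 s) count_cat.
have -> : count (fun v => Qk k y < v) (drop k.-1 s) = 0%N.
  apply/eqP; rewrite -leqn0 leqNgt -has_count; apply/(has_nthP 0) => -[j].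
  rewrite size_drop sz nth_drop => hj /=.
  rewrite /Qk -/s ltNge (sorted_leq_nth tr (lexx) 0 srt) // ?inE ?sz; lia.
rewrite addn0; apply: leq_trans (count_size _ _) _.
by rewrite size_take; case: ltnP.
Qed.
End Q.

Lemma Qk_mono (R : realDomainType) n k (l x : 'I_n -> R) :
  (1 <= k)%N -> (k <= n)%N -> (forall i, l i <= x i) -> Qk k l <= Qk k x.
Proof.
move=> hk1 hkn hlx; rewrite leNgt; apply/negP => h.
have h1 := @Qk_ge _ _ _ l hk1 hkn; have h2 := @Qk_gt _ _ _ x hk1 hkn.
have : (#|[set i | (Qk k l <= l i)%R]| <= #|[set i | (Qk k x < x i)%R]|)%N.
  apply: subset_leq_card; apply/subsetP => i; rewrite !inE => hi.
  exact: lt_le_trans h (le_trans hi (hlx i)).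
lia.
Qed.

Theorem theorem4 (R : realFieldType) (n k : nat) (l u x : 'I_n -> R)
  (hk1 : (1 <= k)%N) (hkn : (k <= n)%N)
  (hlu : forall i, l i <= u i)
  (hlx : forall i, l i <= x i) (hxu : forall i, x i <= u i)
  (W : {set 'I_n}) (hW : (k <= #|W|)%N) (U : R) (hU : Qk k l < U) :
  Qk k l + (U - Qk k l) / ((#|W| - k + 1)%N)%:R
           * (\sum_(i in W) (x i - Qk k l) / (Num.max U (u i) - Qk k l)
              - k%:R + 1)
  <= Qk k x.
Proof.
have hLq : Qk k l <= Qk k x by apply: Qk_mono.
have hgt := @Qk_gt _ _ _ x hk1 hkn.
move: hLq hU hgt.
set L := Qk k l; set q := Qk k x => hLq hU hgt.
set m := #|W|.
have hd : 0 < U - L by rewrite subr_gt0.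
have hM i : U - L <= Num.max U (u i) - L by rewrite lerD2r le_max lexx.
have hMp i : 0 < Num.max U (u i) - L by apply: lt_le_trans (hM i).
have ht1 i : (x i - L) / (Num.max U (u i) - L) <= 1.
  rewrite ler_pdivrMr // mul1r lerD2r; apply: le_trans (hxu i) _.
  by rewrite le_max lexx orbT.
set S := \sum_(i in W) _.
have hN : ((m - k + 1)%N)%:R = m%:R - k%:R + 1 :> R by rewrite natrD natrB.
have hNp : 0 < ((m - k + 1)%N)%:R :> R by rewrite ltr0n addn1.
have hkm : k%:R <= m%:R :> R by rewrite ler_nat.
set N := ((m - k + 1)%N)%:R in hN hNp *.
set d := U - L in hd hM hMp *.
have hdN : 0 <= d / N by apply: divr_ge0; apply: ltW.
case: (lerP U q) => hUq.
  have hS : S <= m%:R.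
    apply: le_trans (ler_sum _ (fun i _ => ht1 i)) _.
    by rewrite sumr_const.
  have : d / N * (S - k%:R + 1) <= d / N * N.
    apply: ler_wpM2l => //; lra.
  rewrite divfK; last by rewrite gt_eqF.
  rewrite /d; lra.
pose P := fun i => q < x i.
set r := (q - L) / d.
have hr0 : 0 <= r by apply: divr_ge0; lra.
have hr1 : r <= 1 by rewrite ler_pdivrMr // mul1r /d; lra.
have hrd : r * d = q - L by rewrite divfK // gt_eqF.
have ht2 i : x i <= q -> (x i - L) / (Num.max U (u i) - L) <= r.
  move=> hxi; rewrite ler_pdivrMr //.
  apply: le_trans (_ : _ <= r * d) _; first lra.
  exact: ler_wpM2l.
have hS : S = \sum_(i in W | P i) (x i - L) / (Num.max U (u i) - L)
            + \sum_(i in W | ~~ P i) (x i - L) / (Num.max U (u i) - L).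
  exact: bigID.
have hc : \sum_(i in W) (1 : R) = \sum_(i in W | P i) 1 + \sum_(i in W | ~~ P i) 1.
  exact: bigID.
rewrite sumr_const in hc.
set c1 := \sum_(i in W | P i) (1 : R) in hc.
set c2 := \sum_(i in W | ~~ P i) (1 : R) in hc.
have hs1 : \sum_(i in W | P i) (x i - L) / (Num.max U (u i) - L) <= c1.
  by apply: ler_sum => i _; apply: ht1.
have hs2 : \sum_(i in W | ~~ P i) (x i - L) / (Num.max U (u i) - L) <= r * c2.
  rewrite /c2 mulr_sumr; apply: ler_sum => i /andP[_ hi].
  by rewrite mulr1; apply: ht2; rewrite /P -leNgt in hi.
have hc1 : c1 <= k%:R - 1.
  have -> : c1 = #|[set i in W | P i]|%:R.
    by rewrite /c1 -sumr_const; apply: eq_bigl => i; rewrite inE.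
  have : (#|[set i in W | P i]| <= k.-1)%N.
    apply: leq_trans hgt; apply: subset_leq_card; apply/subsetP => i.
    by rewrite !inE => /andP[].
  move=> h; rewrite -(@natrB R k 1) // ler_nat; lia.
have key : S - k%:R + 1 <= N * r.
  rewrite hN hS.
  have : 0 <= (k%:R - 1 - c1) * (1 - r) by apply: mulr_ge0; lra.
  nra.
have : d / N * (S - k%:R + 1) <= d / N * (N * r) by apply: ler_wpM2l.
rewrite mulrA divfK; last by rewrite gt_eqF.
lra.
Qed.
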